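(* Let $q$ be an odd prime power and use the setting of the context. Then $\mathcal C=\pi^G$ is a $(6,(q^3-1)(q^2+q+1),4;3)_q$ constant-dimension subspace code; that is, $\mathcal C$ consists of exactly $(q^3-1)(q^2+q+1)$ planes of $\Sigma\cong{\rm PG}(5,q)$ and any two distinct planes of $\mathcal C$ meet in at most one point.
   Context: Let $\Sigma$ be the set of points $\langle(a,b,a^q,b^q,a^{q^2},b^{q^2})\rangle$ of ${\rm PG}(5,q^3)$, $a,b\in{\rm GF}(q^3)$, $(a,b)\ne(0,0)$; since these vectors form a $6$-dimensional ${\rm GF}(q)$-vector space, $\Sigma$ is a model of ${\rm PG}(5,q)$ whose planes correspond to its $3$-dimensional ${\rm GF}(q)$-subspaces. Points are column vectors. For $\eta\in{\rm GF}(q^3)\setminus\{0\}$ let $g_\eta$ be the projectivity with matrix ${\rm diag}(\eta^2,\eta^{q+1},\eta^{2q},\eta^{q^2+q},\eta^{2q^2},\eta^{q^2+1})$, and for $w\in{\rm GF}(q^3)\setminus\{0\}$ let $h_w$ be the projectivity with matrix ${\rm diag}(1,w,1,w^q,1,w^{q^2})$. Let $S=\{g_\eta\}$ (order $q^2+q+1$), $W=\{h_w\}$ (order $q^3-1$), and $G=S\times W$, of order $(q^3-1)(q^2+q+1)$. Let $\pi$ be the plane of $\Sigma$ consisting of the points $\langle(a,\frac{a+a^q}{2},a^q,\frac{a^q+a^{q^2}}{2},a^{q^2},\frac{a^{q^2}+a}{2})\rangle$, $a\in{\rm GF}(q^3)\setminus\{0\}$, and $\mathcal C=\pi^G=\{\pi^g:g\in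 G\}$. An $(n,M,4;3)_q$ constant-dimension code is a set of $M$ planes of ${\rm PG}(n-1,q)$ pairwise meeting in at most a point. *)

(* Defs.v *)
From HB Require Import structures.
From mathcomp Require Import all_boot all_order all_algebra all_fingroup all_field.
Set Implicit Arguments. Unset Strict Implicit. Unset Printing Implicit Defensive.
Import GRing.Theory.
Local Open Scope ring_scope.

Section Sigma.
Variables (F : finFieldType) (q : nat).

Definition sigma_vec (a b : F) : 'cV[F]_6 :=
  \col_(i < 6) nth 0 [:: a; b; a ^+ q; b ^+ q; a ^+ (q ^ 2); b ^+ (q ^ 2)] i.

Definition nonzeroF : {set F} := [set x : F | x != 0].

Definition pi_vecs : {set 'cV[F]_6} :=
  [set sigma_vec a ((a + a ^+ q) / 2%:R) | a in nonzeroF].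

Definition g_mx (eta : F) : 'M[F]_6 :=
  diag_mx (\row_(i < 6) nth 0 [:: eta ^+ 2; eta ^+ (q + 1); eta ^+ (2 * q);
                                eta ^+ (q ^ 2 + q); eta ^+ (2 * q ^ 2);
                                eta ^+ (q ^ 2 + 1)] i).

Definition h_mx (w : F) : 'M[F]_6 :=
  diag_mx (\row_(i < 6) nth 0 [:: 1; w; 1; w ^+ q; 1; w ^+ (q ^ 2)] i).

Definition G_mx : {set 'M[F]_6} :=
  [set g_mx eta *m h_mx w | eta in nonzeroF, w in nonzeroF].

(* The projective point <x> of PG(5,q^3), represented canonically by the
   (canonical generator matrix of the) row space spanned by x^T. *)
Definition proj_pt (x : 'cV[F]_6) : 'M[F]_6 := (<< x^T >>)%MS.

Definition pts (X : {set 'cV[F]_6}) : {set 'M[F]_6} := [set proj_pt x | x in X].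

(* The code C = pi^G, as a set of planes (each plane = its set of points). *)
Definition code_C : {set {set 'M[F]_6}} :=
  [set pts [set M *m x | x in pi_vecs] | M in G_mx].

End Sigma.

(* Main.v *)
Require Import Defs.
From HB Require Import structures.
From mathcomp Require Import all_boot all_order all_algebra all_fingroup all_field.
From mathcomp Require Import cyclic zify ring.
Set Implicit Arguments. Unset Strict Implicit. Unset Printing Implicit Defensive.
Import GRing.Theory.
Local Open Scope ring_scope.

Lemma nq0 q : (0 < q)%N -> (q ^ 3 - 1 = (q - 1) * (q ^ 2 + q + 1))%N.
Proof. move=> h; nia. Qed.
Lemma nq20 q : (1 < q)%N -> (q - 1 < q ^ 3 - 1)%N.
Proof. move=> h; nia. Qed.
Lemma nq30 q : (0 < q)%N -> (q ^ 3 = (q - 1) * (q ^ 2 + q + 1) + 1)%N.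
Proof. move=> h; nia. Qed.
Lemma n00 q : (1 < q)%N -> (0 < q ^ 3 - 1)%N.
Proof. move=> h; nia. Qed.
Lemma aux0 q m j : (0 < q)%N -> (m * j * q = (q - 1) * m * j + m * j)%N.
Proof. move=> h; nia. Qed.

Section Proofs.
Variables (F : finFieldType) (q : nat).
Hypothesis HF : #|F| = (q ^ 3)%N.
Hypothesis Hq1 : (1 < q)%N.
Hypothesis Hoddq : odd q.
Hypothesis H2 : (2%:R : F) != 0.
Hypothesis frobD : forall x y : F, (x + y) ^+ q = x ^+ q + y ^+ q.

Let sv := @sigma_vec F q.
Definition Tr (a : F) := (a + a ^+ q) / 2%:R.

Lemma xq3 (x : F) : x ^+ (q ^ 3) = x.
Proof. by rewrite -HF expf_card. Qed.

Lemma kq2 (c : F) : c ^+ q = c -> c ^+ (q ^ 2) = c.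
Proof. by move=> h; rewrite expnS expn1 exprM h h. Qed.

Lemma svZ (c a b : F) : c ^+ q = c -> c *: sv a b = sv (c * a) (c * b).
Proof.
move=> hc; have hc2 := kq2 hc.
apply/matrixP => i j; rewrite !mxE.
case: i => [[|[|[|[|[|[|i]]]]]] Hi] //=; by rewrite exprMn ?hc ?hc2.
Qed.

Lemma Mapply (eta w a b : F) :
  (@g_mx F q eta *m @h_mx F q w) *m sv a b = sv (eta ^+ 2 * a) (eta ^+ (q + 1) * w * b).
Proof.
rewrite -mulmxA /h_mx /g_mx !mul_diag_mx.
apply/matrixP => i j; rewrite !mxE.
case: i => [[|[|[|[|[|[|i]]]]]] Hi] //=; rewrite ?mul1r ?mulrA //.
- by rewrite exprMn -exprM.
- rewrite !exprMn -exprM; congr (_ ^+ _ * _ * _); lia.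
- by rewrite exprMn -exprM.
- rewrite !exprMn -exprM.
  have -> : ((q + 1) * q ^ 2 = q ^ 3 + q ^ 2)%N by lia.
  by rewrite [eta ^+ (_ + q ^ 2)]exprD xq3 addn1 exprS.
Qed.

Lemma proj_eqZ (c : F) (u : 'cV[F]_6) : c != 0 -> proj_pt (c *: u) = proj_pt u.
Proof.
move=> c0; rewrite /proj_pt; apply: eq_genmx.
rewrite (_ : (c *: u)^T = c *: u^T); last by apply/matrixP=> i j; rewrite !mxE.
exact: eqmx_scale.
Qed.

Lemma proj_eqP (x y x' y' : F) : x != 0 -> proj_pt (sv x y) = proj_pt (sv x' y') ->
  exists c, [/\ c ^+ q = c, x' = c * x & y' = c * y].
Proof.
move=> x0 /genmxP/andP[_ /sub_rVP[c hc]].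
have e : forall i : 'I_6, (sv x' y') i 0 = c * (sv x y) i 0.
  by move=> i; have := congr1 (fun M : 'M[F]_(1,6) => M 0 i) hc; rewrite !mxE.
have e0 := e (inord 0); have e1 := e (inord 1); have e2 := e (inord 2).
rewrite !mxE !inordK // /= in e0 e1 e2.
exists c; split => //.
have xq0 : x ^+ q != 0 by rewrite expf_eq0 negb_and x0 orbT.
apply: (mulIf xq0); rewrite -e2 e0 exprMn.
by [].
Qed.


Definition planeAB (al be : F) : {set 'M[F]_6} :=
  [set proj_pt (sv (al * a) (be * Tr a)) | a in nonzeroF F].

Lemma Tr_scale (c a : F) : c ^+ q = c -> Tr (c * a) = c * Tr a.
Proof. by move=> hc; rewrite /Tr exprMn hc -mulrDr mulrA. Qed.

Lemma nzE (x : F) : (x \in nonzeroF F) = (x != 0).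
Proof. by rewrite /nonzeroF inE. Qed.

Lemma inter_eq (al be al' be' a : F) : al' != 0 -> a != 0 -> al != 0 ->
  proj_pt (sv (al * a) (be * Tr a)) \in planeAB al' be' ->
  be * (a + a ^+ q) = be' * ((al / al') * a + (al / al') ^+ q * a ^+ q).
Proof.
move=> al'0 a0 al0 /imsetP[a' ]; rewrite nzE => a'0 E.
have x0 : al' * a' != 0 by rewrite mulf_neq0.
have [c [hc h1 h2]] := proj_eqP x0 (esym E).
have hb : al / al' * a = c * a'.
  have -> : al / al' * a = (al * a) / al' by rewrite mulrAC.
  by rewrite h1; field.
rewrite -exprMn hb.
have -> : be * (a + a ^+ q) = 2%:R * (be * Tr a) by rewrite /Tr; field.
by rewrite h2 /Tr exprMn hc; field.
Qed.

Lemma two_pts (al be al' be' a1 a2 : F) : a1 != 0 -> a2 != 0 ->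
  be * (a1 + a1 ^+ q) = be' * ((al / al') * a1 + (al / al') ^+ q * a1 ^+ q) ->
  be * (a2 + a2 ^+ q) = be' * ((al / al') * a2 + (al / al') ^+ q * a2 ^+ q) ->
  proj_pt (sv (al * a1) (be * Tr a1)) != proj_pt (sv (al * a2) (be * Tr a2)) ->
  be = be' * (al / al') /\ be = be' * (al / al') ^+ q.
Proof.
move=> a10 a20 E1 E2 neq.
set g := al / al' in E1 E2 *.
set C := be' * g - be; set D := be - be' * g ^+ q.
have Ea : forall a, be * (a + a ^+ q) = be' * (g * a + g ^+ q * a ^+ q) ->
    C * a = D * a ^+ q.
  move=> a h; apply/eqP; rewrite -subr_eq0; apply/eqP.
  have -> : C * a - D * a ^+ q = be' * (g * a + g ^+ q * a ^+ q) - be * (a + a ^+ q)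
    by rewrite /C /D; ring.
  by rewrite h subrr.
have F1 := Ea _ E1; have F2 := Ea _ E2.
have a1q : a1 ^+ q != 0 by rewrite expf_eq0 negb_and a10 orbT.
have a2q : a2 ^+ q != 0 by rewrite expf_eq0 negb_and a20 orbT.
have [C0|C0] := eqVneq C 0; have [D0|D0] := eqVneq D 0.
- by split; [apply/esym/subr0_eq; exact: C0 | apply/subr0_eq; exact: D0].
- by move: F1; rewrite C0 mul0r => /esym/eqP; rewrite mulf_eq0 (negPf D0) (negPf a1q).
- by move: F1; rewrite D0 mul0r => /eqP; rewrite mulf_eq0 (negPf C0) (negPf a10).
exfalso; move/eqP: neq; apply.
set mu := a1 / a2.
have mu0 : mu != 0 by rewrite mulf_neq0 ?invr_eq0.
have hmu : mu ^+ q = mu.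
  rewrite /mu exprMn exprVn.
  have -> : a1 ^+ q = C / D * a1 by rewrite mulrAC F1; field.
  have -> : a2 ^+ q = C / D * a2 by rewrite mulrAC F2; field.
  by field; rewrite C0 D0 a20.
have -> : a1 = mu * a2 by rewrite /mu; field.
rewrite Tr_scale // -[RHS](proj_eqZ _ mu0) svZ //.
by congr (proj_pt (sv _ _)); rewrite mulrCA.
Qed.

Lemma plane_scale (c al be : F) : c != 0 -> c ^+ q = c ->
  planeAB (c * al) (c * be) = planeAB al be.
Proof.
move=> c0 hc; apply/setP => X; apply/imsetP/imsetP => [[a a0 ->]|[a a0 ->]].
- exists (c * a); first by rewrite nzE mulf_neq0 // -nzE.
  by rewrite Tr_scale // !mulrA [c * al]mulrC [c * be]mulrC.
- have hc' : c^-1 ^+ q = c^-1 by rewrite exprVn hc.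
  exists (c^-1 * a); first by rewrite nzE mulf_neq0 ?invr_eq0 // -nzE.
  rewrite Tr_scale //; congr (proj_pt (sv _ _)); field; done.
Qed.


Definition fpl (u : F * F) := planeAB (u.1 ^+ 2) (u.1 ^+ (q + 1) * u.2).
Definition AA := setX (nonzeroF F) (nonzeroF F).
Definition Kst := [set d : F | (d != 0) && (d ^+ q == d)].

Lemma planeM (eta w : F) :
  pts [set (@g_mx F q eta *m @h_mx F q w) *m x | x in @pi_vecs F q] =
  planeAB (eta ^+ 2) (eta ^+ (q + 1) * w).
Proof.
rewrite /pts /pi_vecs /planeAB -!imset_comp; apply: eq_imset => a /=.
by rewrite Mapply.
Qed.

Lemma code_CE : @code_C F q = fpl @: AA.
Proof.
rewrite /code_C /G_mx; apply/setP => X; apply/imsetP/imsetP.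
- move=> [M /imset2P[eta w e0 w0 ->] ->].
  by exists (eta, w); [apply/setXP | rewrite planeM].
- move=> [[eta w] /setXP[e0 w0] ->].
  by exists (@g_mx F q eta *m @h_mx F q w); [apply/imset2P; exists eta w | rewrite planeM].
Qed.

Lemma be_nz (eta w : F) : eta != 0 -> w != 0 -> eta ^+ (q + 1) * w != 0.
Proof. by move=> e0 w0; rewrite mulf_neq0 // expf_neq0. Qed.

Lemma al_nz (eta : F) : eta != 0 -> eta ^+ 2 != 0.
Proof. by move=> e0; rewrite expf_neq0. Qed.

Lemma part2 (P P' : {set 'M[F]_6}) : P \in @code_C F q -> P' \in @code_C F q ->
  P != P' -> (#|P :&: P'| <= 1)%N.
Proof.
rewrite code_CE => /imsetP[[eta w] /setXP[]]; rewrite !nzE => e0 w0 ->.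
move=> /imsetP[[eta' w'] /setXP[]]; rewrite !nzE => e0' w0' -> neqP.
rewrite leqNgt; apply/negP => /card_gt1P[X1 [X2 [/setIP[Y1 Y1'] /setIP[Y2 Y2'] nX]]].
move: Y1 Y2 Y1' Y2' nX; rewrite /fpl /=.
set al := eta ^+ 2; set be := eta ^+ (q + 1) * w.
set al' := eta' ^+ 2; set be' := eta' ^+ (q + 1) * w'.
have al0 : al != 0 := al_nz e0.
have al0' : al' != 0 := al_nz e0'.
have be0 : be != 0 := be_nz e0 w0.
have be0' : be' != 0 := be_nz e0' w0'.
move=> /imsetP[a1 a10 ->] /imsetP[a2 a20 ->] H1' H2' nX.
rewrite !nzE in a10 a20.
have E1 := inter_eq al0' a10 al0 H1'.
have E2 := inter_eq al0' a20 al0 H2'.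
have [hb1 hb2] := two_pts a10 a20 E1 E2 nX.
set g := al / al' in hb1 hb2.
have g0 : g != 0 by rewrite mulf_neq0 ?invr_eq0.
have gq : g ^+ q = g by apply: (mulfI be0'); rewrite -hb2 -hb1.
move/eqP: neqP; apply; change (planeAB al be = planeAB al' be').
have -> : al = g * al' by rewrite /g; field.
by rewrite hb1 [be' * g]mulrC plane_scale.
Qed.

Lemma nq : (q ^ 3 - 1 = (q - 1) * (q ^ 2 + q + 1))%N.
Proof. exact: (nq0 (ltnW Hq1)). Qed.
Lemma nq2 : (q - 1 < q ^ 3 - 1)%N.
Proof. exact: (nq20 Hq1). Qed.
Lemma nq3 : (q ^ 3 = (q - 1) * (q ^ 2 + q + 1) + 1)%N.
Proof. exact: (nq30 (ltnW Hq1)). Qed.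

Lemma card_nz : #|nonzeroF F| = (q ^ 3 - 1)%N.
Proof.
rewrite /nonzeroF; have -> : [set x : F | x != 0] = [set~ 0] by apply/setP=> x; rewrite !inE.
by rewrite cardsC1 HF subn1.
Qed.

Lemma Kst_ge : (q - 1 <= #|Kst|)%N.
Proof.
have n0 : (0 < q ^ 3 - 1)%N := n00 Hq1.
have [z pz] : exists z : F, (q ^ 3 - 1).-primitive_root z.
  have hp : has (q ^ 3 - 1).-primitive_root (enum (nonzeroF F)).
    apply: has_prim_root => //.
    - apply/allP => x; rewrite mem_enum nzE => x0; rewrite unity_rootE; apply/eqP.
      apply: (mulIf x0); rewrite mul1r -exprSr subn1 prednK ?xq3 // expn_gt0 (ltnW Hq1) //.
    - exact: enum_uniq.
    - by rewrite -cardE card_nz.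
  by case/hasP: hp => z _ pz; exists z.
set m := (q ^ 2 + q + 1)%N.
have nm : (q ^ 3 - 1 = (q - 1) * m)%N by apply: nq.
have m0 : (0 < m)%N by rewrite /m addn1.
have z0 : z != 0.
  apply/eqP => z0; have := prim_expr_order pz; rewrite z0 expr0n.
  rewrite (_ : (q ^ 3 - 1 == 0)%N = false); last by rewrite eqn0Ngt n0.
  by move/eqP; rewrite eq_sym mulr0n oner_eq0.
pose gz := fun j : 'I_(q - 1) => z ^+ (m * j).
have inj : injective gz.
  move=> i j /eqP; rewrite /gz (eq_prim_root_expr pz) !modn_small.
  - by rewrite eqn_pmul2l // => /eqP h; apply/val_inj.
  - by rewrite nm mulnC ltn_pmul2r.
  - by rewrite nm mulnC ltn_pmul2r.
have sub : gz @: setT \subset Kst.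
  apply/subsetP => x /imsetP[j _ ->]; rewrite inE expf_neq0 //=; apply/eqP.
  rewrite /gz -exprM (_ : (m * j * q = (q ^ 3 - 1) * j + m * j)%N); last by rewrite nm aux0 // ltnW.
  by rewrite exprD exprM (prim_expr_order pz) expr1n mul1r.
by have := subset_leq_card sub; rewrite card_imset // cardsT card_ord.
Qed.

Lemma Kst_le : (#|Kst| <= q - 1)%N.
Proof.
have q0 : (0 < q - 1)%N by rewrite subn_gt0.
rewrite cardE; apply: (@max_unity_roots F (q - 1)) => //.
- apply/allP => x; rewrite mem_enum inE => /andP[x0 /eqP xq]; rewrite unity_rootE.
  apply/eqP; apply: (mulIf x0); rewrite mul1r -exprSr subn1 prednK; [exact: xq | exact: ltnW Hq1].
- exact: enum_uniq.
Qed.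

Lemma Kst_card : #|Kst| = (q - 1)%N.
Proof. by apply/eqP; rewrite eqn_leq Kst_le Kst_ge. Qed.

Lemma exists_t : exists t : F, t != 0 /\ t ^+ q != t.
Proof.
have : ~~ (nonzeroF F \subset Kst).
  apply/negP => sub; have := subset_leq_card sub; rewrite card_nz Kst_card.
  by rewrite leqNgt nq2.
case/subsetPn => t; rewrite nzE inE => t0; rewrite t0 /= => nt.
by exists t.
Qed.

Lemma sq_in_K (d : F) : d != 0 -> (d ^+ 2) ^+ q = d ^+ 2 -> d ^+ q = d.
Proof.
move=> d0 h.
have q0 : (0 < q)%N := ltnW Hq1.
set e := d ^+ (q - 1).
have dq : d ^+ q = d * e by rewrite /e -exprS subn1 prednK.
have e2 : e ^+ 2 = 1.
  apply: (mulfI (al_nz d0)); rewrite mulr1 -{2}h [RHS]exprAC dq exprMn.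
  by [].
move/eqP: e2; rewrite sqrf_eq1 => /orP[/eqP e1 | /eqP em1].
  by rewrite dq e1 mulr1.
exfalso.
have om : odd (q ^ 2 + q + 1) by rewrite !oddD oddX Hoddq.
have := xq3 d; rewrite nq3 exprD expr1 exprM -/e em1 -signr_odd om expr1 mulN1r => hd.
have : d * 2%:R == 0 by rewrite mulr_natr mulr2n -{1}hd addNr.
by rewrite mulf_eq0 (negPf d0) (negPf H2).
Qed.

Lemma pts_distinct (al be t : F) : al != 0 -> t ^+ q != t ->
  proj_pt (sv (al * 1) (be * Tr 1)) != proj_pt (sv (al * t) (be * Tr t)).
Proof.
move=> al0 tq; apply/eqP => E.
have x0 : al * 1 != 0 by rewrite mulr1.
have [c [hc h1 _]] := proj_eqP x0 E.
move: h1; rewrite mulr1 mulrC => /(mulIf al0) ht.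
by move: tq; rewrite ht hc eqxx.
Qed.

Lemma fiber (u : F * F) : u \in AA ->
  [set v in AA | fpl v == fpl u] = [set (u.1 * d, u.2) | d in Kst].
Proof.
case: u => eta w /setXP[]; rewrite !nzE /= => e0 w0.
apply/setP => [[eta' w']]; rewrite inE; apply/andP/imsetP.
- move=> [/setXP[]]; rewrite !nzE /= => e0' w0' /eqP hf.
  have [t [t0 tq]] := exists_t.
  move: hf; rewrite /fpl /=.
  set al := eta ^+ 2; set be := eta ^+ (q + 1) * w.
  set al' := eta' ^+ 2; set be' := eta' ^+ (q + 1) * w'.
  move=> hf.
  have al0 : al != 0 := al_nz e0.
  have al0' : al' != 0 := al_nz e0'.
  have be0 : be != 0 := be_nz e0 w0.
  have be0' : be' != 0 := be_nz e0' w0'.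
  have X1 : proj_pt (sv (al * 1) (be * Tr 1)) \in planeAB al' be'.
    by rewrite hf; apply/imsetP; exists 1; rewrite // nzE oner_eq0.
  have Xt : proj_pt (sv (al * t) (be * Tr t)) \in planeAB al' be'.
    by rewrite hf; apply/imsetP; exists t; rewrite // nzE.
  have E1 := inter_eq al0' (oner_neq0 _) al0 X1.
  have Et := inter_eq al0' t0 al0 Xt.
  have [hb1 hb2] := two_pts (oner_neq0 _) t0 E1 Et (pts_distinct be al0 tq).
  set g := al / al' in hb1 hb2.
  have gq : g ^+ q = g by apply: (mulfI be0'); rewrite -hb2 -hb1.
  set d0 := eta / eta'.
  have d00 : d0 != 0 by rewrite mulf_neq0 ?invr_eq0.
  have gd : g = d0 ^+ 2 by rewrite /g /al /al' /d0 expr_div_n.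
  have dq : d0 ^+ q = d0 by apply: sq_in_K => //; rewrite -gd.
  have eta_e : eta = d0 * eta' by rewrite /d0; field.
  have e1 : eta ^+ (q + 1) = d0 ^+ 2 * eta' ^+ (q + 1).
    by rewrite eta_e exprMn exprD dq expr1 -expr2.
  have ww : w = w'.
    have nz2 : d0 ^+ 2 * eta' ^+ (q + 1) != 0 by rewrite mulf_neq0 ?expf_neq0.
    apply: (mulfI nz2).
    have h : d0 ^+ 2 * eta' ^+ (q + 1) * w = eta' ^+ (q + 1) * w' * d0 ^+ 2.
      by rewrite -e1 -gd; exact: hb1.
    by rewrite h; ring.
  exists d0^-1; first by rewrite inE invr_eq0 d00 exprVn dq eqxx.
  by rewrite /= ww eta_e; congr pair; field.
- move=> [d]; rewrite inE => /andP[d0 /eqP dq] [-> ->] /=.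
  split; first by apply/setXP; rewrite !nzE mulf_neq0.
  apply/eqP; rewrite /fpl /=.
  have dq2 : (d ^+ 2) ^+ q = d ^+ 2 by rewrite exprAC dq.
  rewrite -[RHS](@plane_scale (d ^+ 2) (eta ^+ 2) (eta ^+ (q + 1) * w) (al_nz d0) dq2); congr planeAB.
  + by rewrite exprMn mulrC.
  + by rewrite exprMn [d ^+ (q + 1)]exprD dq expr1 -expr2; ring.
Qed.

Lemma count_main : (#|AA| = #|fpl @: AA| * #|Kst|)%N.
Proof.
rewrite -sum1_card (partition_big_imset fpl) /= -sum_nat_const.
apply: eq_bigr => j /imsetP[u uA ->].
rewrite sum1dep_card.
rewrite (_ : [set x | (x \in AA) && (fpl x == fpl u)] = [set v in AA | fpl v == fpl u]) //.
rewrite fiber // card_imset //.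
case: u uA => eta w /setXP[e0 _] d1 d2 [] /=.
by move/(mulfI _); apply; rewrite -nzE.
Qed.


Lemma main_in :
  #|@code_C F q| = ((q ^ 3 - 1) * (q ^ 2 + q + 1))%N /\
  (forall P P' : {set 'M[F]_6},
     P \in @code_C F q -> P' \in @code_C F q -> P != P' ->
     (#|P :&: P'| <= 1)%N).
Proof using HF Hq1 Hoddq H2 frobD.
split; last exact: part2.
have C := count_main.
rewrite /AA cardsX card_nz Kst_card -code_CE in C.
have q0 : (0 < q - 1)%N by rewrite subn_gt0.
apply/eqP; rewrite -(eqn_pmul2r q0) -C; apply/eqP.
rewrite nq; set m := (q ^ 2 + q + 1)%N.
ring.
Qed.

End Proofs.

Theorem theorem4p2 (q : nat)
  (Hq_pp : exists2 p : nat, prime p & exists2 k : nat, (0 < k)%N & q = (p ^ k)%N)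
  (Hq_odd : odd q)
  (F : finFieldType) (HF : #|F| = (q ^ 3)%N) :
  #|code_C F q| = ((q ^ 3 - 1) * (q ^ 2 + q + 1))%N /\
  (forall P P' : {set 'M[F]_6},
     P \in code_C F q -> P' \in code_C F q -> P != P' ->
     (#|P :&: P'| <= 1)%N).
Proof.
case: Hq_pp => p pp [k k0 qE].
have pch : p \in [pchar F].
  by apply: (@card_finPcharP F p (k * 3)) => //; rewrite HF qE -expnM.
have Hq1 : (1 < q)%N by rewrite qE -(expn0 p) ltn_exp2l ?prime_gt1.
have podd : odd p by move: Hq_odd; rewrite qE oddX eqn0Ngt k0.
have H2 : (2%:R : F) != 0.
  rewrite -(dvdn_pcharf pch 2); apply/negP => /(dvdn_leq (isT : (0 < 2)%N)) hp2.
  have p2 : p = 2%N by have := prime_gt1 pp; lia.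
  by rewrite p2 in podd.
have frobD : forall x y : F, (x + y) ^+ q = x ^+ q + y ^+ q.
  move=> x y; apply: exprDn_pchar.
  by rewrite qE pnatX (pnatE _ pp) pch.
exact: (main_in HF Hq1 Hq_odd H2 frobD).
Qed.
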